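(* Let $S_n(x)=(18n+24)\sin(x)-(9n+27)\sin((n+1)x)+9n\sin((n+2)x)+2\sin(4x)-\sin(5x)$. For every integer $n\geq 21$ and every $x\in\bigl(2.5/(n+2),\,2\pi/3\bigr)$ one has $S_n(x)>0$. *)

(* Defs.v *)
From Stdlib Require Import Reals Lra Lia.
Open Scope R_scope.

Definition S_n (n : nat) (x : R) : R :=
  (18 * INR n + 24) * sin x
  - (9 * INR n + 27) * sin ((INR n + 1) * x)
  + 9 * INR n * sin ((INR n + 2) * x)
  + 2 * sin (4 * x) - sin (5 * x).

(* Main.v *)
Require Import Defs.
From Stdlib Require Import Reals Lra Lia Psatz.
Open Scope R_scope.
Lemma PI_gt3 : 3 < PI.
Proof. generalize PI2_3_2; lra. Qed.

Lemma sin_lb_eq y: sin_lb y = y - y^3/6 + y^5/120 - y^7/5040.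
Proof. unfold sin_lb, sin_approx. cbv [sum_f_R0]. unfold sin_term.
 replace (Factorial.fact (2*3+1)) with 5040%nat by reflexivity.
 replace (Factorial.fact (2*2+1)) with 120%nat by reflexivity.
 replace (Factorial.fact (2*1+1)) with 6%nat by reflexivity.
 replace (Factorial.fact (2*0+1)) with 1%nat by reflexivity.
 rewrite !INR_IZR_INZ. replace (Z.of_nat 5040) with 5040%Z by reflexivity.
 replace (Z.of_nat 120) with 120%Z by reflexivity.
 replace (Z.of_nat 6) with 6%Z by reflexivity.
 replace (Z.of_nat 1) with 1%Z by reflexivity.
 simpl Nat.mul; simpl Nat.add. field. Qed.

Lemma sin_ub0 y : 0 <= y -> sin y <= y.
Proof. intros H. destruct (Req_dec y 0) as [->|H']. rewrite sin_0; lra.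
  left; apply sin_lt_x; lra. Qed.

Lemma sin_lb0 y : 0 <= y <= 2 -> y - y^3/6 <= sin y.
Proof. intros H. generalize PI_gt3; intro. destruct (SIN y) as [H1 _]; try lra.
  rewrite sin_lb_eq in H1. assert (0 <= y^5) by (apply pow_le; lra).
  assert (E : y^7 = y^5 * (y*y)) by ring. assert (y*y <= 4) by nra. nra. Qed.

Lemma sin_ge0 y : 0 <= y <= 2 -> 0 <= sin y.
Proof. intros H. generalize (sin_lb0 y H). nra. Qed.

Lemma cos_half y : cos y = 1 - 2 * sin (y/2) * sin (y/2).
Proof. rewrite <- cos_2a_sin. f_equal. field. Qed.

Lemma cos_lb0 y : 0 <= y <= 2 -> 1 - y^2/2 <= cos y.
Proof. intros H. rewrite cos_half. generalize (sin_ub0 (y/2)) (sin_ge0 (y/2)); intros. nra. Qed.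

Lemma cos_ub0 y : 0 <= y <= 2 -> cos y <= 1 - y^2/2 + y^4/24.
Proof. intros H. rewrite cos_half. pose proof (sin_lb0 (y/2) ltac:(lra)) as H1.
  set (L := y/2 - (y/2)^3/6) in *. assert (HL : 0 <= L) by (unfold L; nra).
  assert (HS : L*L <= sin (y/2) * sin (y/2)) by (apply Rmult_le_compat; lra).
  assert (E : 2*(L*L) = y^2/2 - y^4/24 + y^6/1152) by (unfold L; field).
  assert (0 <= y^6) by (apply pow_le; lra). lra. Qed.
Definition s3 := sqrt 3 / 2.
Lemma s3_sq : s3 * s3 = 3/4.
Proof. unfold s3. assert (H := sqrt_sqrt 3 ltac:(lra)). nra. Qed.
Lemma s3_pos : 0.86 < s3.
Proof. assert (0 <= s3) by (unfold s3; generalize (sqrt_pos 3); lra). generalize s3_sq; nra. Qed.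
Lemma cos23 : cos (2*PI/3) = -1/2.
Proof. replace (2*PI/3) with (PI - PI/3) by field. rewrite cos_minus, cos_PI, sin_PI, cos_PI3. lra. Qed.
Lemma sin23 : sin (2*PI/3) = s3.
Proof. replace (2*PI/3) with (PI - PI/3) by field. rewrite sin_minus, cos_PI, sin_PI, sin_PI3. unfold s3; lra. Qed.
Lemma cos43 : cos (4*PI/3) = -1/2.
Proof. replace (4*PI/3) with (PI + PI/3) by field. rewrite cos_plus, cos_PI, sin_PI, cos_PI3. lra. Qed.
Lemma sin43 : sin (4*PI/3) = - s3.
Proof. replace (4*PI/3) with (PI + PI/3) by field. rewrite sin_plus, cos_PI, sin_PI, sin_PI3. unfold s3; lra. Qed.
Lemma sin23m (y:R) : sin (2*PI/3 - y) = s3 * cos y + 1/2 * sin y.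
Proof. rewrite sin_minus, sin23, cos23. lra. Qed.
Lemma sin43m (y:R) : sin (4*PI/3 - y) = - s3 * cos y + 1/2 * sin y.
Proof. rewrite sin_minus, sin43, cos43. lra. Qed.
Lemma sin4x (x:R) : sin (4*x) = sin x * (8*cos x^3 - 4*cos x).
Proof. replace (4*x) with (2*(2*x)) by ring. rewrite !sin_2a, cos_2a_cos. ring. Qed.
Lemma sin5x (x:R) : sin (5*x) = sin x * (16*cos x^4 - 12*cos x^2 + 1).
Proof. replace (5*x) with (2*(2*x) + x) by ring. rewrite sin_plus, !sin_2a, !cos_2a_cos. ring. Qed.

Lemma D1_bounds (N : R) : 21 <= N ->
  let m0 := 18*N+27 in let D1 := (m0 - 81/16)*(m0 - 81/16)/2 - (27/4)*m0 in
  D1 >= 941/10 * ((N+2)*(N+2)) /\ D1 >= 92 * (N*N).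
Proof. intros HN m0 D1. unfold D1, m0. split; nra. Qed.

Lemma regI_G (N c : R) : 21 <= N -> -1/2 <= c <= 1 -> 31/10/((N+2)*(N+2)) <= 1 - c ->
  85/100/(N*N) <= c + 1/2 ->
  (1 - c^2) * (18*N+24 + 16*c^3 - 8*c - 16*c^4 + 12*c^2 - 1)^2
   - (162*N^2+486*N)*(1-c) - 729 > 0.
Proof.
  intros HN Hc Hv Hw.
  pose (v := 1 - c). pose (p := v*(3-2*v)). pose (m0 := 18*N+27).
  assert (Hm : 18*N+24 + 16*c^3 - 8*c - 16*c^4 + 12*c^2 - 1 = m0 - 4*(p*p))
    by (unfold p, v, m0; ring).
  rewrite Hm.
  assert (Hv0 : 0 <= v <= 3/2) by (unfold v; lra).
  assert (Hp0 : 0 <= p) by (unfold p; apply Rmult_le_pos; lra).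
  assert (Hp1 : p <= 9/8). { pose proof (pow2_ge_0 (v - 3/4)).
     assert (E : 9/8 - p = 2*(v-3/4)^2) by (unfold p; field). lra. }
  assert (HG : (1 - c^2) * (m0 - 4*(p*p))^2 - (162*N^2+486*N)*(1-c) - 729
     = (p+v)*((m0-4*(p*p))*(m0-4*(p*p)))/2 - v*(162*N^2+486*N) - 729) by (unfold p, v; field).
  rewrite HG.
  pose (D1 := (m0 - 81/16)*(m0 - 81/16)/2 - (27/4)*m0).
  assert (Hpp : p*p <= 9/8*(9/8)) by (apply Rmult_le_compat; lra).
  assert (Hm2 : 0 <= m0 - 81/16) by (unfold m0; lra).
  assert (Hsq : (m0 - 81/16)*(m0 - 81/16) <= (m0-4*(p*p))*(m0-4*(p*p)))
    by (apply Rmult_le_compat; lra).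
  assert (Hpv : p * v <= 9/8*(3/2)) by (apply Rmult_le_compat; lra).
  assert (Hlow : (p+v)*((m0-4*(p*p))*(m0-4*(p*p)))/2 - v*(162*N^2+486*N) - 729
       >= p*D1 + 729/2*v - 729).
  { assert (E : (p+v)*((m0-4*(p*p))*(m0-4*(p*p)))/2 - v*(162*N^2+486*N) - 729 - (p*D1 + 729/2*v - 729)
       = p*((m0-4*(p*p))*(m0-4*(p*p)) - (m0-81/16)*(m0-81/16))/2 + p*m0*((27/4) - 4*(p*v)) + 8*((p*p)*(p*p))*v)
      by (unfold D1, m0; field).
    assert (0 <= p*((m0-4*(p*p))*(m0-4*(p*p)) - (m0-81/16)*(m0-81/16))/2).
    { assert (0 <= p*((m0-4*(p*p))*(m0-4*(p*p)) - (m0-81/16)*(m0-81/16))) by (apply Rmult_le_pos; lra). lra. }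
    assert (0 <= p*m0*((27/4) - 4*(p*v))).
    { apply Rmult_le_pos. apply Rmult_le_pos; [lra| unfold m0; lra]. lra. }
    assert (0 <= 8*((p*p)*(p*p))*v).
    { apply Rmult_le_pos; [ | lra]. assert (0 <= p*p) by (apply Rmult_le_pos; lra).
      assert (0 <= (p*p)*(p*p)) by (apply Rmult_le_pos; lra). lra. }
    lra. }
  destruct (D1_bounds N HN) as [HD1 HD2]. fold m0 in HD1, HD2. fold D1 in HD1, HD2.
  assert (HNp : 0 < (N+2)*(N+2)) by (apply Rmult_lt_0_compat; lra).
  assert (HNq : 0 < N*N) by (apply Rmult_lt_0_compat; lra).
  assert (HD0 : 0 <= D1) by lra.
  enough (p*D1 + 729/2*v - 729 > 0) by lra.
  destruct (Rle_lt_dec v (1/4)) as [H1|H1].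
  - assert (Hp2 : p >= 5/2 * v) by (unfold p; nra).
    assert (HvM : v * ((N+2)*(N+2)) >= 31/10). { unfold v. apply Rle_ge.
      apply (Rmult_le_reg_r (/((N+2)*(N+2)))). apply Rinv_0_lt_compat; lra.
      rewrite Rmult_assoc, Rinv_r by lra. lra. }
    assert (p*D1 >= 5/2*v*D1) by (apply Rle_ge, Rmult_le_compat_r; lra).
    assert (v*D1 >= v*(941/10 * ((N+2)*(N+2)))) by (apply Rle_ge, Rmult_le_compat_l; lra).
    lra.
  - destruct (Rle_lt_dec v (14/10)) as [H2|H2].
    + assert (p >= 28/100) by (unfold p; nra).
      assert (p*D1 >= 28/100*D1) by (apply Rle_ge, Rmult_le_compat_r; lra).
      lra.
    + assert (Hp3 : p >= 28/10 * (c + 1/2)).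
      { assert (E : p = 2 * v * (c + 1/2)) by (unfold p, v; field).
        rewrite E. assert (0 <= c + 1/2) by lra. nra. }
      assert (HwN : (c+1/2) * (N*N) >= 85/100). { apply Rle_ge.
      apply (Rmult_le_reg_r (/(N*N))). apply Rinv_0_lt_compat; lra.
      rewrite Rmult_assoc, Rinv_r by lra. lra. }
      assert (p*D1 >= 28/10 * (c + 1/2)*D1) by (apply Rle_ge, Rmult_le_compat_r; lra).
      assert ((c+1/2)*D1 >= (c+1/2)*(92*(N*N))) by (apply Rle_ge, Rmult_le_compat_l; lra).
      lra.
Qed.

Lemma combine (N c s co si : R) : 0 <= N -> 0 < s -> s*s = 1 - c*c -> co*co + si*si = 1 ->
  0 < 18*N+24 + 16*c^3 - 8*c - 16*c^4 + 12*c^2 - 1 ->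
  (1 - c^2) * (18*N+24 + 16*c^3 - 8*c - 16*c^4 + 12*c^2 - 1)^2
   - (162*N^2+486*N)*(1-c) - 729 > 0 ->
  s * (18*N+24 + 16*c^3 - 8*c - 16*c^4 + 12*c^2 - 1) + 9*N*s*co - (9*N*(1-c)+27)*si > 0.
Proof.
  intros HN Hs Hsc Hcs Hm HG.
  set (m := 18*N+24 + 16*c^3 - 8*c - 16*c^4 + 12*c^2 - 1) in *.
  set (A := 9*N*(1-c)+27). set (B := 9*N*s).
  assert (HP : 0 < s*m) by (apply Rmult_lt_0_compat; lra).
  assert (HAB : A*A + B*B = (162*N^2+486*N)*(1-c) + 729) by (unfold A, B; nra).
  assert (HP2 : (s*m)*(s*m) > A*A + B*B).
  { replace ((s*m)*(s*m)) with ((s*s)*(m*m)) by ring. rewrite Hsc. nra. }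
  assert (HX : (B*co - A*si)*(B*co - A*si) <= A*A + B*B).
  { assert (E : (B*co - A*si)*(B*co - A*si) + (B*si + A*co)*(B*si + A*co) = (A*A+B*B)*(co*co+si*si)) by ring.
    rewrite Hcs in E. pose proof (Rle_0_sqr (B*si + A*co)). unfold Rsqr in *. lra. }
  assert (HY : (B*co - A*si)*(B*co - A*si) < (s*m)*(s*m)) by lra.
  assert (B*co - A*si > - (s*m)) by nra.
  unfold B in *. lra.
Qed.

Lemma S_decomp (n : nat) (x : R) :
  S_n n x = sin x * (18*INR n+24 + 16*cos x^3 - 8*cos x - 16*cos x^4 + 12*cos x^2 - 1)
   + 9*INR n*sin x*cos ((INR n + 1)*x) - (9*INR n*(1-cos x)+27)*sin ((INR n+1)*x).
Proof.
  unfold S_n. rewrite sin4x, sin5x.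
  replace ((INR n + 2) * x) with ((INR n + 1) * x + x) by ring. rewrite sin_plus. ring.
Qed.

Lemma regionI (n : nat) (x : R) : 21 <= INR n ->
  5/2/(INR n + 2) <= x -> x <= 2*PI/3 - 1/(INR n * INR n) -> S_n n x > 0.
Proof.
  intros HN H1 H2. rewrite S_decomp. set (N := INR n) in *.
  generalize PI_gt3; intro HPI.
  assert (HNq : 441 <= N*N) by nra.
  assert (Hd : 0 < 1/(N*N) <= 1/441).
  { split. apply Rdiv_lt_0_compat; lra. apply Rmult_le_reg_r with (N*N). lra.
    field_simplify; try lra. }
  assert (Hx0 : 0 < 5/2/(N+2) <= 5/46).
  { split. apply Rdiv_lt_0_compat; lra. apply Rmult_le_reg_r with (N+2). lra.
    field_simplify; lra. }
  set (d := 1/(N*N)) in *. set (x0 := 5/2/(N+2)) in *.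
  assert (Hs : 0 < sin x) by (apply sin_gt_0; lra).
  assert (Hc1 : cos x <= cos x0) by (apply cos_decr_1; lra).
  assert (Hc2 : cos (2*PI/3 - d) <= cos x) by (apply cos_decr_1; lra).
  rewrite cos_minus, cos23, sin23 in Hc2.
  pose proof (cos_ub0 x0 ltac:(lra)). pose proof (cos_ub0 d ltac:(lra)).
  pose proof (sin_lb0 d ltac:(lra)). pose proof s3_pos.
  pose proof (cos_lb0 d ltac:(lra)).
  assert (Hw : 85/100/(N*N) <= cos x + 1/2).
  { replace (85/100/(N*N)) with (85/100*d) by (unfold d; field; lra).
    assert (cos d <= 1) by (pose proof (COS_bound d); lra).
    assert (E3 : d^3 = d*(d*d)) by ring.
    assert (Hdd : d*d <= d/441) by nra.
    assert (Hdp : 0 <= d - d^3/6) by nra.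
    assert (86/100 * (d - d^3/6) <= s3 * sin d) by (apply Rmult_le_compat; lra).
    nra. }
  assert (Hv : 31/10/((N+2)*(N+2)) <= 1 - cos x).
  { replace (31/10/((N+2)*(N+2))) with (496/1000*(x0*x0)) by (unfold x0; field; lra).
    assert (E4 : x0^4 = (x0*x0)*(x0*x0)) by ring. assert (E2 : x0^2 = x0*x0) by ring.
    assert (Hq : x0*x0 <= 25/2116) by nra.
    assert ((x0*x0)*(x0*x0) <= (x0*x0) * (25/2116)) by (apply Rmult_le_compat_l; nra).
    assert (0 <= x0*x0) by nra. lra. }
  assert (Hcx : -1/2 <= cos x <= 1).
  { assert (0 < 85/100/(N*N)) by (apply Rdiv_lt_0_compat; lra). pose proof (COS_bound x). lra. }
  pose proof (regI_G N (cos x) HN Hcx Hv Hw) as HG.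
  apply combine; try lra.
  - pose proof (sin2 x). unfold Rsqr in *. lra.
  - pose proof (sin2_cos2 ((N+1)*x)). unfold Rsqr in *. lra.
  - set (c := cos x) in *. set (p := (1-c)*(1+2*c)).
    assert (E : 18*N+24 + 16*c^3 - 8*c - 16*c^4 + 12*c^2 - 1 = 18*N+27 - 4*(p*p)) by (unfold p; ring).
    rewrite E. assert (0 <= p) by (unfold p; apply Rmult_le_pos; lra).
    assert (p <= 9/8) by (pose proof (pow2_ge_0 (c - 1/4)); unfold p; nra).
    assert (p*p <= 9/8*(9/8)) by (apply Rmult_le_compat; lra). lra.
Qed.
Ltac posu N := 
  let u := fresh "u" in
  assert (Hu : 0 <= N - 21) by lra; set (u := N - 21) in *;
  replace N with (u + 21) by (unfold u; ring);
  assert (0 <= u^2) by (apply pow_le; lra);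
  assert (0 <= u^3) by (apply pow_le; lra);
  assert (0 <= u^4) by (apply pow_le; lra);
  assert (0 <= u^5) by (apply pow_le; lra);
  clearbody u.
Lemma b1 N : 21 <= N -> ((9*N+27)*(N+1)^4 + 9*N*(N+2)^4)/24 <= 2*N^5.
Proof. intros. posu N. lra. Qed.
Lemma b2 N : 21 <= N -> (18*N+24 + 9*N*(N+2)^3 + 128)/6 <= 3*N^4.
Proof. intros. posu N. lra. Qed.

Lemma case0_alg (N t s : R) : 21 <= N -> 0 < t -> t*(N*N) <= 1 -> 86/100 < s ->
  s*(t^2*((18*N^3+81*N^2+81*N-54)/2 - t^2*(((9*N+27)*(N+1)^4 + 9*N*(N+2)^4)/24)))
  - 1/2*(t^3*((18*N+24 + 9*N*(N+2)^3 + 128)/6)) > 0.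
Proof.
  intros HN Ht HtN Hs.
  pose proof (b1 N HN) as B1. pose proof (b2 N HN) as B2.
  set (beta := ((9*N+27)*(N+1)^4 + 9*N*(N+2)^4)/24) in *.
  set (gam := (18*N+24 + 9*N*(N+2)^3 + 128)/6) in *.
  set (w := t*(N*N)) in *.
  assert (Hw0 : 0 < w) by (unfold w; apply Rmult_lt_0_compat; nra).
  assert (Hww : w*w <= 1) by (replace 1 with (1*1) by ring; apply Rmult_le_compat; lra).
  assert (Ht2 : 0 <= t^2) by (apply pow_le; lra).
  assert (HA : t^2*beta <= t^2*(2*N^5)) by (apply Rmult_le_compat_l; lra).
  assert (E1 : t^2*(2*N^5) = 2*N*(w*w)) by (unfold w; ring).
  assert (HB : 2*N*(w*w) <= 2*N*1) by (apply Rmult_le_compat_l; lra).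
  assert (HN2 : 0 <= N^2) by (apply pow_le; lra).
  assert (HN3 : 21*N^2 <= N^3) by (replace (N^3) with (N*N^2) by ring; apply Rmult_le_compat_r; lra).
  set (K := (18*N^3+81*N^2+81*N-54)/2 - t^2*beta).
  assert (HK : 8*N^3 <= K) by (unfold K; lra).
  assert (HsK : 86/100*(8*N^3) <= s*K) by (apply Rmult_le_compat; lra).
  assert (HC : t*gam <= t*(3*N^4)) by (apply Rmult_le_compat_l; lra).
  assert (E2 : t*(3*N^4) = 3*N^2*w) by (unfold w; ring).
  assert (HD : 3*N^2*w <= 3*N^2*1) by (apply Rmult_le_compat_l; lra).
  assert (Hin : 0 < s*K - 1/2*(t*gam)) by (assert (0 < N^2) by (apply pow_lt; lra); lra).
  assert (Ht2' : 0 < t^2) by (apply pow_lt; lra).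
  assert (0 < t^2 * (s*K - 1/2*(t*gam))) by (apply Rmult_lt_0_compat; lra).
  replace (s*(t^2*((18*N^3+81*N^2+81*N-54)/2 - t^2*beta)) - 1/2*(t^3*gam))
    with (t^2 * (s*K - 1/2*(t*gam))) by (unfold K; field).
  lra.
Qed.

Lemma mulle (k y z : R) : 0 <= k -> y <= z -> k*y <= k*z.
Proof. intros; apply Rmult_le_compat_l; lra. Qed.

Lemma regionII (n : nat) (x : R) : 21 <= INR n ->
  2*PI/3 - 1/(INR n * INR n) < x -> x < 2*PI/3 -> S_n n x > 0.
Proof.
  intros HN H1 H2.
  pose (t := 2*PI/3 - x). assert (Hx : x = 2*PI/3 - t) by (unfold t; lra).
  clearbody t. subst x.
  pose proof (Nat.div_mod_eq n 3) as Hdm.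
  pose proof (Nat.mod_upper_bound n 3 ltac:(lia)) as Hr.
  remember (n / 3)%nat as k. remember (n mod 3)%nat as r.
  assert (HNk : INR n = 3*INR k + INR r) by (rewrite Hdm at 1; rewrite plus_INR, mult_INR; simpl; ring).
  clear Heqk Heqr Hdm.
  unfold S_n. set (N := INR n) in *.
  generalize PI_gt3; intro HPI.
  assert (HNN : 441 <= N*N) by nra.
  assert (Ht : 0 < t) by lra.
  assert (HtN : t*(N*N) <= 1).
  { assert (t < 1/(N*N)) by lra. apply Rmult_le_reg_r with (/(N*N)). apply Rinv_0_lt_compat; lra.
    rewrite Rmult_assoc, Rinv_r by lra. unfold Rdiv in *. lra. }
  assert (Ht1 : t <= 1/441).
  { apply Rmult_le_reg_r with 441. lra. assert (t*441 <= t*(N*N)) by (apply mulle; lra). lra. }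
  assert (Ha : 0 <= (N+1)*t <= 1).
  { split. apply Rmult_le_pos; lra. assert ((N+1)*t <= (N*N)*t) by (apply Rmult_le_compat_r; nra). lra. }
  assert (Hb : 0 <= (N+2)*t <= 1).
  { split. apply Rmult_le_pos; lra. assert ((N+2)*t <= (N*N)*t) by (apply Rmult_le_compat_r; nra). lra. }
  rewrite sin23m.
  replace (4*(2*PI/3 - t)) with ((2*PI/3 - 4*t) + 2*INR 1*PI) by (simpl; field).
  rewrite sin_period, sin23m.
  replace (5*(2*PI/3 - t)) with ((4*PI/3 - 5*t) + 2*INR 1*PI) by (simpl; field).
  rewrite sin_period, sin43m.
  pose proof s3_pos as Hs3.
  assert (r = 0 \/ r = 1 \/ r = 2)%nat as [-> | [-> | ->]] by lia; simpl INR in HNk.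
  -
    replace ((N+1)*(2*PI/3 - t)) with ((2*PI/3 - (N+1)*t) + 2*INR k*PI) by (rewrite HNk; field).
    rewrite sin_period, sin23m.
    replace ((N+2)*(2*PI/3 - t)) with ((4*PI/3 - (N+2)*t) + 2*INR k*PI) by (rewrite HNk; field).
    rewrite sin_period, sin43m.
    set (a := (N+1)*t) in *. set (b := (N+2)*t) in *.
    pose proof (cos_lb0 t ltac:(lra)) as c1. pose proof (cos_ub0 a ltac:(lra)) as c2.
    pose proof (cos_ub0 b ltac:(lra)) as c3. pose proof (cos_lb0 (4*t) ltac:(lra)) as c4.
    pose proof (cos_lb0 (5*t) ltac:(lra)) as c5.
    pose proof (sin_lb0 t ltac:(lra)) as s1. pose proof (sin_ub0 a ltac:(lra)) as s2.
    pose proof (sin_lb0 b ltac:(lra)) as s3'. pose proof (sin_lb0 (4*t) ltac:(lra)) as s4.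
    pose proof (sin_ub0 (5*t) ltac:(lra)) as s5.
    pose proof (mulle (18*N+24) _ _ ltac:(lra) c1) as m1.
    pose proof (mulle (9*N+27) _ _ ltac:(lra) c2) as m2.
    pose proof (mulle (9*N) _ _ ltac:(lra) c3) as m3.
    pose proof (mulle (18*N+24) _ _ ltac:(lra) s1) as m4.
    pose proof (mulle (9*N+27) _ _ ltac:(lra) s2) as m5.
    pose proof (mulle (9*N) _ _ ltac:(lra) s3') as m6.
    set (C := (18*N+24)*cos t - (9*N+27)*cos a - 9*N*cos b + 2*cos (4*t) + cos (5*t)).
    set (Sn := (18*N+24)*sin t - (9*N+27)*sin a + 9*N*sin b + 2*sin (4*t) - sin (5*t)).
    assert (HC : t^2*((18*N^3+81*N^2+81*N-54)/2 - t^2*(((9*N+27)*(N+1)^4 + 9*N*(N+2)^4)/24)) <= C).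
    { replace (t^2*((18*N^3+81*N^2+81*N-54)/2 - t^2*(((9*N+27)*(N+1)^4 + 9*N*(N+2)^4)/24)))
       with ((18*N+24)*(1 - t^2/2) - (9*N+27)*(1 - a^2/2 + a^4/24) - 9*N*(1 - b^2/2 + b^4/24)
             + 2*(1 - (4*t)^2/2) + (1 - (5*t)^2/2)) by (unfold a, b; field).
      unfold C. lra. }
    assert (HS : - (t^3*((18*N+24 + 9*N*(N+2)^3 + 128)/6)) <= Sn).
    { replace (- (t^3*((18*N+24 + 9*N*(N+2)^3 + 128)/6)))
       with ((18*N+24)*(t - t^3/6) - (9*N+27)*a + 9*N*(b - b^3/6) + 2*(4*t - (4*t)^3/6) - 5*t)
       by (unfold a, b; field).
      unfold Sn. lra. }
    pose proof (mulle s3 _ _ ltac:(lra) HC) as HsC.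
    pose proof (case0_alg N t s3 HN Ht HtN Hs3) as Halg.
    replace ((18 * N + 24) * (s3 * cos t + 1 / 2 * sin t) - (9 * N + 27) * (s3 * cos a + 1 / 2 * sin a) +
      9 * N * (- s3 * cos b + 1 / 2 * sin b) + 2 * (s3 * cos (4 * t) + 1 / 2 * sin (4 * t)) -
      (- s3 * cos (5 * t) + 1 / 2 * sin (5 * t))) with (s3*C + 1/2*Sn) by (unfold C, Sn; field).
    lra.
  -
    replace ((N+1)*(2*PI/3 - t)) with ((4*PI/3 - (N+1)*t) + 2*INR k*PI) by (rewrite HNk; field).
    rewrite sin_period, sin43m.
    replace ((N+2)*(2*PI/3 - t)) with ((- ((N+2)*t)) + 2*INR (S k)*PI) by (rewrite S_INR, HNk; field).
    rewrite sin_period, sin_neg.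
    set (a := (N+1)*t) in *. set (b := (N+2)*t) in *.
    pose proof (cos_lb0 t ltac:(lra)) as c1. pose proof (cos_lb0 a ltac:(lra)) as c2.
    pose proof (cos_lb0 (4*t) ltac:(lra)) as c4. pose proof (cos_lb0 (5*t) ltac:(lra)) as c5.
    assert (1/2 <= cos t) by nra. assert (1/2 <= cos a) by nra.
    assert (1/2 <= cos (4*t)) by nra. assert (1/2 <= cos (5*t)) by nra.
    pose proof (sin_ge0 t ltac:(lra)). pose proof (sin_ge0 (4*t) ltac:(lra)).
    pose proof (sin_ub0 a ltac:(lra)) as s2. pose proof (sin_ub0 b ltac:(lra)) as s3'.
    pose proof (sin_ub0 (5*t) ltac:(lra)) as s5.
    pose proof (mulle (18*N+24) _ _ ltac:(lra) H) as m1.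
    pose proof (mulle (9*N+27) _ _ ltac:(lra) H0) as m2.
    pose proof (mulle (18*N+24) _ _ ltac:(lra) H3) as m3.
    pose proof (mulle (9*N+27) _ _ ltac:(lra) s2) as m4.
    pose proof (mulle (9*N) _ _ ltac:(lra) s3') as m5.
    assert (Ea : (9*N+27)*a <= 12) by
      (unfold a; assert ((9*N+27)*(N+1) <= 12*(N*N)) by nra;
       assert ((9*N+27)*(N+1)*t <= 12*(N*N)*t) by (apply Rmult_le_compat_r; lra);
       replace ((9*N+27)*((N+1)*t)) with ((9*N+27)*(N+1)*t) by ring; lra).
    assert (Eb : 9*N*b <= 10) by
      (unfold b; assert (9*N*(N+2) <= 10*(N*N)) by nra;
       assert (9*N*(N+2)*t <= 10*(N*N)*t) by (apply Rmult_le_compat_r; lra);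
       replace (9*N*((N+2)*t)) with (9*N*(N+2)*t) by ring; lra).
    set (X := (18*N+24)*cos t + (9*N+27)*cos a + 2*cos (4*t) + cos (5*t)).
    assert (HX : (27*N+54)/2 <= X) by (unfold X; lra).
    pose proof (mulle s3 _ _ ltac:(lra) HX) as HsX.
    assert (86/100*((27*N+54)/2) <= s3*((27*N+54)/2)) by (apply Rmult_le_compat_r; lra).
    replace ((18 * N + 24) * (s3 * cos t + 1 / 2 * sin t) - (9 * N + 27) * (- s3 * cos a + 1 / 2 * sin a) +
      9 * N * - sin b + 2 * (s3 * cos (4 * t) + 1 / 2 * sin (4 * t)) -
      (- s3 * cos (5 * t) + 1 / 2 * sin (5 * t)))
     with (s3*X + (1/2*((18*N+24)*sin t) - 1/2*((9*N+27)*sin a) - 9*N*sin b + sin (4*t) - 1/2*sin (5*t)))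
     by (unfold X; field).
    assert (0 <= (18*N+24)*sin t) by (apply Rmult_le_pos; lra).
    lra.
  -
    replace ((N+1)*(2*PI/3 - t)) with ((- ((N+1)*t)) + 2*INR (S k)*PI) by (rewrite S_INR, HNk; field).
    rewrite sin_period, sin_neg.
    replace ((N+2)*(2*PI/3 - t)) with ((2*PI/3 - (N+2)*t) + 2*INR (S k)*PI) by (rewrite S_INR, HNk; field).
    rewrite sin_period, sin23m.
    set (a := (N+1)*t) in *. set (b := (N+2)*t) in *.
    pose proof (cos_lb0 t ltac:(lra)) as c1. pose proof (cos_lb0 b ltac:(lra)) as c2.
    pose proof (cos_lb0 (4*t) ltac:(lra)) as c4. pose proof (cos_lb0 (5*t) ltac:(lra)) as c5.
    assert (1/2 <= cos t) by nra. assert (1/2 <= cos b) by nra.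
    assert (1/2 <= cos (4*t)) by nra. assert (1/2 <= cos (5*t)) by nra.
    pose proof (sin_ge0 t ltac:(lra)). pose proof (sin_ge0 (4*t) ltac:(lra)).
    pose proof (sin_ge0 a ltac:(lra)). pose proof (sin_ge0 b ltac:(lra)).
    pose proof (sin_ub0 (5*t) ltac:(lra)) as s5.
    pose proof (mulle (18*N+24) _ _ ltac:(lra) H) as m1.
    pose proof (mulle (9*N) _ _ ltac:(lra) H0) as m2.
    assert (0 <= (18*N+24)*sin t) by (apply Rmult_le_pos; lra).
    assert (0 <= (9*N+27)*sin a) by (apply Rmult_le_pos; lra).
    assert (0 <= 9*N*sin b) by (apply Rmult_le_pos; lra).
    set (X := (18*N+24)*cos t + 9*N*cos b + 2*cos (4*t) + cos (5*t)).
    assert (HX : (27*N+27)/2 <= X) by (unfold X; lra).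
    pose proof (mulle s3 _ _ ltac:(lra) HX) as HsX.
    assert (86/100*((27*N+27)/2) <= s3*((27*N+27)/2)) by (apply Rmult_le_compat_r; lra).
    replace ((18 * N + 24) * (s3 * cos t + 1 / 2 * sin t) - (9 * N + 27) * - sin a +
      9 * N * (s3 * cos b + 1 / 2 * sin b) + 2 * (s3 * cos (4 * t) + 1 / 2 * sin (4 * t)) -
      (- s3 * cos (5 * t) + 1 / 2 * sin (5 * t)))
     with (s3*X + (1/2*((18*N+24)*sin t) + (9*N+27)*sin a + 1/2*(9*N*sin b) + sin (4*t) - 1/2*sin (5*t)))
     by (unfold X; field).
    lra.
Qed.

Theorem mainTheorem15 (n : nat) (x : R) :
  (21 <= n)%nat ->
  (5 / 2) / (INR n + 2) < x -> x < 2 * PI / 3 ->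
  S_n n x > 0.
Proof.
  intros Hn H1 H2.
  assert (HN : INR 21 <= INR n) by (apply le_INR; lia).
  replace (INR 21) with 21 in HN by (simpl; ring).
  destruct (Rle_lt_dec x (2*PI/3 - 1/(INR n * INR n))) as [H3|H3].
  - apply regionI; lra.
  - apply regionII; lra.
Qed.
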